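(* If $(k,\alpha)\in\Upsilon$ and $(w_1,w_2,x,g,t)\in\Gamma(k,\alpha)$, then the right infinite word $w_1w_2xt$ is $\alpha$-power free, i.e. $w_1w_2xt\in L^{\mathbb N,R}_{k,\alpha}$.
   Context: $\Sigma_k$ is an alphabet with $k$ letters. For a nonempty finite word $r$ and a rational $\beta\ge 1$ with $\beta|r|$ an integer, the $\beta$-power $r^\beta$ is the word $rr\cdots rt$ of length $\beta|r|$, where $t$ is a prefix of $r$. For rational $\alpha\ge1$, a word is $\alpha$-power free if it has no factor that is a $\beta$-power with $\beta\ge\alpha$, and $\alpha^+$-power free if it has no factor that is a $\beta$-power with $\beta>\alpha$; ''$\alpha$'' may denote a rational number or a symbol $\alpha^+$. $L_{k,\alpha}$ is the set of finite $\alpha$-power free words over $\Sigma_k$, and $L^{\mathbb N,R}_{k,\alpha}$ the set of right infinite words over $\Sigma_k$ all of whose finite factors lie in $L_{k,\alpha}$. $\Upsilon$ is the set of pairs: $(k,\alpha)$ with $k=3$ and rational $\alpha>2$; $(k,\alpha)$ with $k>3$ and rational $\alpha\ge2$; $(k,\alpha^+)$ with $k\ge3$ and rational $\alpha\ge2$. $\operatorname{occur}(w,s)$ denotes the number of occurrences of a nonempty word $s$ as a factor of $w$. Prefixes of a word include the empty word (and the word itself if finite). For $(k,\alpha)\in\Upsilon$, $(w_1,w_2,x,g,t)\in\Gamma(k,\alpha)$ means: $w_1,w_2,g\in\Sigma_k^*$; $x\in\Sigma_k$; $w_1w_2xg\in L_{k,\alpha}$; $t\in L^{\mathbb N,R}_{k,\alpha}$;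 $\operatorname{occur}(t,x)=0$; $g$ is a prefix of $t$; $\operatorname{occur}(w_2xgy,xgy)=1$, where $y\in\Sigma_k$ is the letter such that $gy$ is a prefix of $t$; and $\operatorname{occur}(w_2,x)\ge\operatorname{occur}(w_1,x)$. *)

(* Defs.v *)
From HB Require Import structures.
From mathcomp Require Import all_boot all_order all_algebra.
Set Implicit Arguments. Unset Strict Implicit. Unset Printing Implicit Defensive.
Import Order.TTheory GRing.Theory Num.Theory.

(* Alphabet Sigma_k = 'I_k ; finite words = seq 'I_k ;
   right infinite words = nat -> 'I_k. *)

(* An exponent "alpha" is either a rational alpha (plus = false)
   or the symbol alpha^+ (plus = true). *)

Definition is_beta_power {T : Type} (u : seq T) (beta : rat) : Prop :=
  exists r : seq T,
    [/\ (0 < size r)%N, (1 <= beta)%R,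
        ((size u)%:R = beta * (size r)%:R :> rat)%R
      & u = take (size u) (flatten (nseq (size u) r))].

Definition forbidden_exp (alpha : rat) (plus : bool) (beta : rat) : bool :=
  if plus then (alpha < beta)%R else (alpha <= beta)%R.

Definition power_free {T : eqType} (alpha : rat) (plus : bool) (w : seq T) : Prop :=
  forall (u : seq T) (beta : rat),
    infix u w -> is_beta_power u beta -> ~~ forbidden_exp alpha plus beta.

Definition L_fin (k : nat) (alpha : rat) (plus : bool) (w : seq 'I_k) : Prop :=
  power_free alpha plus w.

Definition inf_factor {T : Type} (t : nat -> T) (m n : nat) : seq T :=
  mkseq (fun i => t (m + i)%N) n.

Definition L_inf (k : nat) (alpha : rat) (plus : bool) (t : nat -> 'I_k) : Prop :=
  forall m n : nat, L_fin alpha plus (inf_factor t m n).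

Definition cat_inf {T : Type} (u : seq T) (t : nat -> T) : nat -> T :=
  fun i => if (i < size u)%N then nth (t 0%N) u i else t (i - size u)%N.

Definition occur {T : eqType} (w s : seq T) : nat :=
  count (fun i => take (size s) (drop i w) == s) (iota 0 (size w - size s).+1) *
  (size s <= size w)%N.

Definition occur_inf_letter_zero {T : eqType} (t : nat -> T) (x : T) : Prop :=
  forall i, t i != x.

Definition inf_prefix {T : Type} (g : seq T) (t : nat -> T) : Prop :=
  g = mkseq t (size g).

Definition Upsilon (k : nat) (alpha : rat) (plus : bool) : Prop :=
  if plus then (3 <= k)%N /\ (2 <= alpha)%R
  else ((k = 3) /\ (2 < alpha)%R) \/ ((3 < k)%N /\ (2 <= alpha)%R).

Definition Gamma (k : nat) (alpha : rat) (plus : bool)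
  (w1 w2 : seq 'I_k) (x : 'I_k) (g : seq 'I_k) (t : nat -> 'I_k) : Prop :=
  let y := t (size g) in
  L_fin alpha plus (w1 ++ w2 ++ x :: g) /\
  L_inf alpha plus t /\
  occur_inf_letter_zero t x /\
  inf_prefix g t /\
  occur (w2 ++ x :: g ++ [:: y]) (x :: g ++ [:: y]) = 1%N /\
  (occur w1 [:: x] <= occur w2 [:: x])%N.

(* Main.v *)
Require Import Defs.
From mathcomp Require Import all_boot all_order all_algebra.
From mathcomp Require Import zify.
Import Order.TTheory GRing.Theory Num.Theory.

Lemma nth_flatten_nseq (T : Type) (d : T) r N i :
  (i < N * size r)%N -> nth d (flatten (nseq N r)) i = nth d r (i %% size r).
Proof.
elim: N i => [|N IH] i; first by rewrite mul0n.
move=> Hi /=; rewrite nth_cat.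
case: ltnP => Hir; first by rewrite modn_small.
rewrite IH; last by rewrite mulSn in Hi; lia.
by rewrite -{2}(subnK Hir) modnDr.
Qed.

Lemma beta_power_per (T : Type) (d : T) (u : seq T) beta :
  is_beta_power u beta -> exists p, [/\ (0 < p)%N,
    ((size u)%:R = beta * p%:R :> rat)%R &
    forall i, (i + p < size u)%N -> nth d u (i + p) = nth d u i].
Proof.
case=> r [Hr _ Hs Hu]; exists (size r); split => // i Hi.
have E : forall j, (j < size u)%N -> nth d u j = nth d r (j %% size r).
  move=> j Hj; rewrite Hu nth_take // nth_flatten_nseq //.
  apply: (leq_trans Hj); rewrite leq_pmulr //.
by rewrite !E ?modnDr //; lia.
Qed.

Lemma infix_mkseq (T : eqType) (f : nat -> T) (u : seq T) n :
  infix u (mkseq f n) -> exists m', u = mkseq (fun i => f (m' + i)) (size u).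
Proof.
move/infixP=> [s [s' E]]; exists (size s).
apply: (@eq_from_nth _ (f 0)); first by rewrite size_mkseq.
move=> i Hi; rewrite nth_mkseq //.
have Hs : size (mkseq f n) = (size s + size u + size s')%N by rewrite E !size_cat addnA.
rewrite size_mkseq in Hs.
have := congr1 (fun l => nth (f 0) l (size s + i)) E.
by rewrite nth_mkseq; [rewrite nth_cat ltnNge leq_addr /= addKn nth_cat Hi => <-|lia].
Qed.

Lemma infix_factor (T : eqType) (d : T) (s : seq T) m n :
  (m + n <= size s)%N -> infix (mkseq (fun i => nth d s (m + i)) n) s.
Proof.
move=> H.
have -> : mkseq (fun i => nth d s (m + i)) n = take n (drop m s).
  apply: (@eq_from_nth _ d); first by rewrite size_mkseq size_takel // size_drop; lia.
  move=> i; rewrite size_mkseq => Hi; rewrite nth_mkseq // nth_take // nth_drop //.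
exact: infix_trans (infix_take _ _) (infix_drop _ _).
Qed.

Lemma occur1 (T : eqType) (w : seq T) x : occur w [:: x] = count (pred1 x) w.
Proof.
rewrite /occur.
case: w => [|a w]; first by [].
set s := a :: w.
have -> : (size [:: x] <= size s)%N = true by [].
rewrite muln1 subn1 prednK //.
rewrite -[in RHS](mkseq_nth a s) /mkseq count_map.
apply: eq_in_count => i; rewrite mem_iota => /andP [_ Hi].
rewrite /= (drop_nth a) //= take0.
by rewrite eqseq_cons andbT.
Qed.

Lemma count_shift (T : eqType) (s : seq T) x a (f : nat -> T) d :
  (forall i, (i < size s)%N -> f (a + i)%N = nth d s i) ->
  count (pred1 x) s = count (fun j => f j == x) (iota a (size s)).
Proof.
move=> H.
have -> : iota a (size s) = map (addn a) (iota 0 (size s)) by rewrite -iotaDl addn0.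
rewrite -[in LHS](mkseq_nth d s) /mkseq !count_map.
apply: eq_in_count => i; rewrite mem_iota => /andP [_ Hi].
by rewrite /= H.
Qed.

Theorem mainTheorem3 (k : nat) (alpha : rat) (plus : bool)
  (w1 w2 : seq 'I_k) (x : 'I_k) (g : seq 'I_k) (t : nat -> 'I_k) :
  Upsilon k alpha plus ->
  Gamma alpha plus w1 w2 x g t ->
  L_inf alpha plus (cat_inf (w1 ++ w2 ++ [:: x]) t).
Proof.
move=> HU [HL [Ht [Hx [Hg [Hocc Hcnt]]]]].
set W := w1 ++ w2 ++ [:: x].
set z := cat_inf W t.
set y := t (size g).
set Z := w1 ++ w2 ++ x :: g ++ [:: y].
have Ha : (2 <= alpha)%R.
  move: HU; rewrite /Upsilon; case: (plus) => [[_ ->]//|[[_ /ltW]|[_]]//].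
have Hbeta : forall beta, forbidden_exp alpha plus beta -> (2 <= beta)%R.
  move=> beta; rewrite /forbidden_exp; case: (plus) => H.
    exact: le_trans Ha (ltW H).
  exact: le_trans Ha H.
have sW : size W = (size w1 + size w2 + 1)%N by rewrite /W !size_cat /= addnA.
have sZ : size Z = (size w1 + size w2 + size g + 2)%N.
  by rewrite /Z !size_cat /= size_cat /=; lia.
have ng : forall i, (i < size g)%N -> nth (t 0%N) g i = t i.
  by move=> i Hi; rewrite {1}Hg nth_mkseq.
have zZ : forall j, (j < size Z)%N -> z j = nth (t 0%N) Z j.
  move=> j Hj.
  have -> : Z = W ++ g ++ [:: y] by rewrite /Z /W -!catA.
  rewrite /z /cat_inf nth_cat; case: ltnP => // H1.
  rewrite nth_cat; case: ltnP => H2; first by rewrite ng.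
  have -> : (j - size W - size g = 0)%N by move: Hj; rewrite sZ; lia.
  by rewrite /y; congr t; move: Hj; rewrite sZ; lia.
set P := (size w1 + size w2)%N.
have zx : z P = x.
  rewrite zZ; last by rewrite sZ /P; lia.
  by rewrite /Z /P nth_cat ltnNge leq_addr /= addKn nth_cat ltnn subnn.
have znx : forall j, (size W <= j)%N -> z j != x.
  by move=> j Hj; rewrite /z /cat_inf ltnNge Hj /=; apply: Hx.
have main : forall m n beta, is_beta_power (inf_factor z m n) beta ->
    ~~ forbidden_exp alpha plus beta.
  move=> m n beta Hp; apply/negP => Hf.
  have H2 := Hbeta _ Hf.
  have [HmW|HmW] := leqP (size W) m.
    have E : inf_factor z m n = inf_factor t (m - size W) n.
      apply: eq_mkseq => i; rewrite /z /cat_inf.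
      have -> : (m + i < size W) = false by lia.
      by congr t; lia.
    have := Ht (m - size W)%N n _ beta (infix_refl _); rewrite -E => /(_ Hp).
    by rewrite Hf.
  have [Hmn|Hmn] := leqP (m + n) (size W + size g).
    have E : inf_factor z m n =
        mkseq (fun i => nth (t 0%N) (w1 ++ w2 ++ x :: g) (m + i)) n.
      rewrite /inf_factor /mkseq; apply/eq_in_map => i; rewrite mem_iota => /andP [_ Hi].
      rewrite zZ; last by rewrite sZ; lia.
      have -> : Z = (w1 ++ w2 ++ x :: g) ++ [:: y] by rewrite /Z -!catA.
      rewrite nth_cat; case: ltnP => //.
      rewrite !size_cat /=; lia.
    have Hinf : infix (mkseq (fun i => nth (t 0%N) (w1 ++ w2 ++ x :: g) (m + i)) n)
        (w1 ++ w2 ++ x :: g) by apply: infix_factor; rewrite !size_cat /=; lia.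
    have := HL _ beta Hinf; rewrite -E => /(_ Hp).
    by rewrite Hf.
  have [p [Hp0 Hsz Hper]] := @beta_power_per _ (t 0%N) _ _ Hp.
  rewrite size_mkseq in Hsz Hper.
  have Per : forall i, (m <= i)%N -> (i + p < m + n)%N -> z (i + p) = z i.
    move=> i H1 H3.
    have := Hper (i - m)%N; rewrite !nth_mkseq; try lia.
    have -> : (m + (i - m + p) = i + p)%N by lia.
    have -> : (m + (i - m) = i)%N by lia.
    by apply; lia.
  have H2p : (2 * p <= n)%N.
    rewrite -(@ler_nat rat) Hsz natrM.
    by rewrite ler_wpM2r // ler0n.
  have HPp : (m + n <= P + p)%N.
    rewrite leqNgt; apply/negP => H.
    have E : z (P + p) = z P by apply: Per; lia.
    rewrite zx in E.
    have : (size W <= P + p)%N by rewrite sW /P; lia.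
    by move/znx; rewrite E eqxx.
  have Hq : (m + p <= P)%N by lia.
  have Shift : forall j, (j <= size g + 1)%N -> z (P - p + j) = z (P + j).
    move=> j Hj; have -> : (P + j = P - p + j + p)%N by lia.
    by rewrite Per //; lia.
  have [Hw1|Hw1] := leqP (size w1) (P - p).
    rewrite -/y in Hocc.
    set V := w2 ++ x :: g ++ [:: y] in Hocc.
    set s0 := x :: g ++ [:: y] in Hocc.
    have ss0 : size s0 = (size g + 2)%N by rewrite /s0 /= size_cat /=; lia.
    have sV : size V = (size w2 + size s0)%N by rewrite /V size_cat.
    have ZV : Z = w1 ++ V by [].
    have nV : forall i, (i < size V)%N -> nth (t 0%N) V i = z (size w1 + i).
      move=> i Hi; rewrite zZ; last by rewrite ZV size_cat; lia.
      by rewrite ZV nth_cat ltnNge leq_addr /= addKn.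
    have ns0 : forall j, (j < size s0)%N -> nth (t 0%N) s0 j = z (P + j).
      move=> j Hj; rewrite /P -addnA -nV; last by lia.
      by rewrite /V nth_cat ltnNge leq_addr /= addKn.
    have occ_at : forall i, (i <= size w2)%N ->
        (forall j, (j < size s0)%N -> z (size w1 + i + j) = z (P + j)) ->
        take (size s0) (drop i V) == s0.
      move=> i Hi H; apply/eqP; apply: (@eq_from_nth _ (t 0%N)).
        by rewrite size_takel // size_drop; lia.
      move=> j; rewrite size_takel ?size_drop; last by lia.
      move=> Hj; rewrite nth_take // nth_drop nV; last by lia.
      by rewrite ns0 // -H // addnA.
    have : (2 <= occur V s0)%N.
      rewrite /occur.
      have -> : (size s0 <= size V)%N = true by lia.
      rewrite muln1 -size_filter.
      have -> : (size V - size s0)%N = size w2 by lia.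
      have -> : 2%N = size [:: size w2; P - p - size w1]%N by [].
      apply: uniq_leq_size.
        by rewrite /= inE andbT; apply/eqP; lia.
      move=> i; rewrite !inE => /orP [] /eqP ->; rewrite mem_filter mem_iota.
        by rewrite occ_at //; lia.
      have HH : take (size s0) (drop (P - p - size w1) V) == s0.
        apply: occ_at; first lia.
        move=> j Hj; have -> : (size w1 + (P - p - size w1) + j = P - p + j)%N by lia.
        by apply: Shift; lia.
      by rewrite HH /=; lia.
    by rewrite Hocc.
  have HP : P = (size w1 + size w2)%N by [].
  have K : forall j, (size w1 <= j <= P)%N -> z j = x -> (m + p <= j)%N /\ z (j - p) = x.
    move=> j /andP [Hj1 Hj2] Hzj.
    have [Hjp|Hjp] := ltnP j (m + p).
      have E : z (j + p) = z j by apply: Per; lia.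
      rewrite Hzj in E.
      have : (size W <= j + p)%N by rewrite sW /P; lia.
      by move/znx; rewrite E eqxx.
    split => //; rewrite -Hzj.
    have {2}-> : j = (j - p + p)%N by lia.
    by rewrite Per //; lia.
  have cnt1 : count (pred1 x) w1 = count (fun j => z j == x) (iota 0 (size w1)).
    apply: (@count_shift _ _ _ _ _ (t 0%N)) => i Hi.
    rewrite add0n zZ; last by rewrite sZ (leq_trans Hi) // -!addnA leq_addr.
    by rewrite /Z nth_cat Hi.
  have cnt2 : count (pred1 x) (w2 ++ [:: x]) =
      count (fun j => z j == x) (iota (size w1) (size (w2 ++ [:: x]))).
    apply: (@count_shift _ _ _ _ _ (t 0%N)) => i Hi.
    rewrite size_cat /= in Hi.
    rewrite zZ; last by rewrite sZ /P; lia.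
    rewrite /Z nth_cat ltnNge leq_addr /= addKn !nth_cat.
    case: ltnP => // H.
    by have -> : (i - size w2 = 0)%N by lia.
  rewrite !occur1 in Hcnt.
  move: cnt2; rewrite count_cat /= eqxx addn0 size_cat /= => cnt2.
  have : (count (pred1 x) w2 + 1 <= count (pred1 x) w1)%N.
    rewrite cnt1 cnt2 -!size_filter.
    set A := filter _ (iota (size w1) _).
    set B := filter _ (iota 0 _).
    have memA : forall j, j \in A -> (size w1 <= j <= P)%N /\ z j = x.
      move=> j; rewrite mem_filter mem_iota => /andP [/eqP Q1 Q2].
      split => //; rewrite HP; lia.
    rewrite -(size_map (subn^~ p)).
    apply: uniq_leq_size.
      rewrite map_inj_in_uniq; first by rewrite filter_uniq // iota_uniq.
      move=> j1 j2 /memA [Hj1 /(K _ Hj1) [Q1 _]] /memA [Hj2 /(K _ Hj2) [Q2 _]] /=.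
      lia.
    move=> i /mapP [j /memA [Hj /(K _ Hj) [Q1 Q2]] ->].
    rewrite mem_filter mem_iota Q2 eqxx /=.
    lia.
  lia.
move=> m n u beta /infix_mkseq [m' ->].
have -> : mkseq (fun i => z (m + (m' + i))) (size u) = inf_factor z (m + m') (size u).
  by apply: eq_mkseq => i; rewrite addnA.
exact: main.
Qed.
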